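(* Let $M$ be a left $H$-module with action $\triangleright$, and let $T\in\mathrm{End}_k(M)$ be a projection ($T^2=T$). For $h\in H$ put $$T_h=h_{(1)}\triangleright T(S(h_{(2)})\triangleright -),\qquad \tilde T_h=S(h_{(1)})\triangleright T(h_{(2)}\triangleright -).$$ The following are equivalent: (i) $T_h\circ T=T\circ T_h$ for all $h\in H$; (ii) $\tilde T_h\circ T=T\circ\tilde T_h$ for all $h\in H$; (iii) $T_h\circ\tilde T_k=\tilde T_k\circ T_h$ for all $h,k\in H$.
   Context: Throughout, $k$ is a field and $H$ is a Hopf algebra over $k$ with bijective antipode $S$ and Sweedler notation $\Delta(h)=h_{(1)}\otimes h_{(2)}$. Condition (i) is called the c-condition and condition (ii) the $\tilde c$-condition. *)

(* Defs.v *)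
(* An element of H (x) H is represented by a finite list of simple tensors
   [(a_1,b_1); ...] meaning sum_i a_i (x) b_i (Sweedler notation).
   Equalities in H (x) H (resp. H (x) H (x) H) are expressed by testing
   against all bilinear (resp. trilinear) maps into arbitrary k-vector
   spaces, i.e. via the universal property of the tensor product. *)
From HB Require Import structures.
From mathcomp Require Import all_boot all_order all_algebra.
Set Implicit Arguments. Unset Strict Implicit. Unset Printing Implicit Defensive.
Import Order.TTheory GRing.Theory Num.Theory.
Local Open Scope ring_scope.

Section Hopf.
Variable k : fieldType.

Definition klinear (U V : lmodType k) (f : U -> V) : Prop :=
  forall (c : k) (x y : U), f (c *: x + y) = c *: f x + f y.

Definition kform_linear (U : lmodType k) (f : U -> k) : Prop :=
  forall (c : k) (x y : U), f (c *: x + y) = c * f x + f y.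

Definition kbilinear (U W V : lmodType k) (phi : U -> W -> V) : Prop :=
  (forall w, klinear (fun u => phi u w)) /\ (forall u, klinear (phi u)).

Definition ktrilinear (U W X V : lmodType k) (phi : U -> W -> X -> V) : Prop :=
  [/\ forall w x, klinear (fun u => phi u w x),
      forall u x, klinear (fun w => phi u w x)
    & forall u w, klinear (phi u w)].

Definition tens_eval (H V : lmodType k) (t : seq (H * H)) (phi : H -> H -> V) : V :=
  \sum_(p <- t) phi p.1 p.2.

Definition is_hopf (H : algType k) (Delta : H -> seq (H * H)) (eps : H -> k)
    (S : H -> H) : Prop :=
  [/\
      forall (V : lmodType k) (phi : H -> H -> V), kbilinear phi ->
        forall (c : k) (x y : H),
          tens_eval (Delta (c *: x + y)) phi
          = c *: tens_eval (Delta x) phi + tens_eval (Delta y) phi,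
      forall (V : lmodType k) (phi : H -> H -> H -> V), ktrilinear phi ->
        forall h : H,
          \sum_(p <- Delta h) \sum_(q <- Delta p.1) phi q.1 q.2 p.2
          = \sum_(p <- Delta h) \sum_(q <- Delta p.2) phi p.1 q.1 q.2,
      [/\ kform_linear eps,
          forall h : H, \sum_(p <- Delta h) eps p.1 *: p.2 = h
        & forall h : H, \sum_(p <- Delta h) eps p.2 *: p.1 = h],
      [/\ forall (V : lmodType k) (phi : H -> H -> V), kbilinear phi ->
            forall x y : H,
              tens_eval (Delta (x * y)) phi
              = \sum_(p <- Delta x) \sum_(q <- Delta y) phi (p.1 * q.1) (p.2 * q.2),
          forall (V : lmodType k) (phi : H -> H -> V), kbilinear phi ->
            tens_eval (Delta 1) phi = phi 1 1,
          forall x y : H, eps (x * y) = eps x * eps y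
        & eps 1 = 1]
    &
      [/\ klinear S,
          forall h : H, \sum_(p <- Delta h) S p.1 * p.2 = (eps h)%:A
        & forall h : H, \sum_(p <- Delta h) p.1 * S p.2 = (eps h)%:A]].

Definition is_left_module (H : algType k) (M : lmodType k) (act : H -> M -> M) : Prop :=
  [/\ kbilinear act,
      forall m : M, act 1 m = m
    & forall (a b : H) (m : M), act (a * b) m = act a (act b m)].

Definition Tc (H : algType k) (M : lmodType k) (Delta : H -> seq (H * H))
    (S : H -> H) (act : H -> M -> M) (T : M -> M) (h : H) (m : M) : M :=
  \sum_(p <- Delta h) act p.1 (T (act (S p.2) m)).

Definition Ttc (H : algType k) (M : lmodType k) (Delta : H -> seq (H * H))
    (S : H -> H) (act : H -> M -> M) (T : M -> M) (h : H) (m : M) : M :=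
  \sum_(p <- Delta h) act (S p.1) (T (act p.2 m)).

End Hopf.

(* Main.v *)
Require Import Defs.
From HB Require Import structures.
From mathcomp Require Import all_boot all_order all_algebra.
Import GRing.Theory.
Local Open Scope ring_scope.
Set Implicit Arguments. Unset Strict Implicit. Unset Printing Implicit Defensive.

Section Basics.
Variable k : fieldType.

Lemma lin0 (U V : lmodType k) (f : U -> V) : klinear f -> f 0 = 0.
Proof.
move=> hf; have h := hf 1 0 0; rewrite scaler0 addr0 scale1r in h.
by apply: (addIr (f 0)); rewrite add0r -h.
Qed.

Lemma linD (U V : lmodType k) (f : U -> V) x y : klinear f -> f (x + y) = f x + f y.
Proof. by move=> hf; have := hf 1 x y; rewrite !scale1r. Qed.

Lemma linZ (U V : lmodType k) (f : U -> V) c x : klinear f -> f (c *: x) = c *: f x.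
Proof. by move=> hf; have := hf c x 0; rewrite (lin0 hf) !addr0. Qed.

Lemma lin_sum (U V : lmodType k) (f : U -> V) (I : Type) (s : seq I) (F : I -> U) :
  klinear f -> f (\sum_(i <- s) F i) = \sum_(i <- s) f (F i).
Proof.
move=> hf; elim: s => [|x s IH]; first by rewrite !big_nil lin0.
by rewrite !big_cons linD // IH.
Qed.

Lemma klin_id (U : lmodType k) : klinear (fun u : U => u).
Proof. by []. Qed.

Lemma klin_comp (U V W : lmodType k) (f : V -> W) (g : U -> V) :
  klinear f -> klinear g -> klinear (fun u => f (g u)).
Proof. by move=> hf hg c x y; rewrite hg hf. Qed.

Lemma klin_bil1 (U W X V : lmodType k) (F : U -> W -> V) (A : X -> U) w :
  kbilinear F -> klinear A -> klinear (fun u => F (A u) w).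
Proof. by move=> [h1 _] hA c x y; rewrite hA h1. Qed.

Lemma klin_bil2 (U W X V : lmodType k) (F : U -> W -> V) (B : X -> W) u0 :
  kbilinear F -> klinear B -> klinear (fun u => F u0 (B u)).
Proof. by move=> [_ h2] hB c x y; rewrite hB h2. Qed.

Lemma klin_scale (X V : lmodType k) (c0 : k) (B : X -> V) :
  klinear B -> klinear (fun u => c0 *: B u).
Proof. by move=> hB c x y; rewrite hB scalerDr !scalerA mulrC. Qed.

Lemma mul_bil (H : algType k) : kbilinear (fun a b : H => a * b).
Proof.
split=> w c x y; first by rewrite mulrDl scalerAl.
by rewrite mulrDr scalerAr.
Qed.

End Basics.
Arguments lin_sum [k U V f I s F].
Arguments linZ [k U V f c x].
Arguments linD [k U V f x y].


Section Hopf.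
Variables (k : fieldType) (H : algType k) (Delta : H -> seq (H * H)) (eps : H -> k) (S : H -> H).
Hypothesis hopfH : is_hopf Delta eps S.

Definition D2 (V : lmodType k) (h : H) (f : H -> H -> V) : V := \sum_(p <- Delta h) f p.1 p.2.

Lemma S_lin : klinear S. Proof. by case: hopfH => _ _ _ _ []. Qed.
Lemma eps_lin : kform_linear eps. Proof. by case: hopfH => _ _ [] . Qed.

Lemma klin_eps (X V : lmodType k) (A : X -> H) (v : V) :
  klinear A -> klinear (fun u => eps (A u) *: v).
Proof. by move=> hA c x y; rewrite hA eps_lin scalerDl scalerA. Qed.

Lemma klin_D2 (V : lmodType k) (F : H -> H -> V) : kbilinear F -> klinear (fun h => D2 h F).
Proof. by case: hopfH => DL _ _ _ _ hF c x y; apply: DL. Qed.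

Lemma klin_D2_body (X V : lmodType k) (h : H) (F : X -> H -> H -> V) :
  (forall a b, klinear (fun u => F u a b)) -> klinear (fun u => D2 h (F u)).
Proof.
move=> hF c x y; rewrite /D2 scaler_sumr -big_split; apply: eq_bigr => p _; exact: hF.
Qed.


Lemma klin_mull (X : lmodType k) (A : X -> H) (b : H) : klinear A -> klinear (fun u => A u * b).
Proof. by move=> hA c x y; rewrite hA mulrDl scalerAl. Qed.
Lemma klin_mulr (X : lmodType k) (B : X -> H) (a : H) : klinear B -> klinear (fun u => a * B u).
Proof. by move=> hB c x y; rewrite hB mulrDr scalerAr. Qed.

Ltac lin := cbv beta; first
  [ exact: klin_id
  | apply: klin_mull; lin
  | apply: klin_mulr; lin
  | apply: klin_D2; split => ? ; lin
  | apply: klin_D2_body => ? ?; lin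
  | eapply klin_bil1; [first [eassumption | exact: mul_bil] | lin]
  | eapply klin_bil2; [first [eassumption | exact: mul_bil] | lin]
  | eapply klin_eps; lin
  | eapply klin_scale; lin
  | eapply klin_comp; [first [eassumption | exact: S_lin] | lin] ].

Ltac bil := split => ? ; lin.
Ltac tril := split => ? ?; lin.

Lemma D2_ext (V : lmodType k) h (F G : H -> H -> V) :
  (forall a b, F a b = G a b) -> D2 h F = D2 h G.
Proof. by move=> e; apply: eq_bigr => p _; apply: e. Qed.

Lemma D2_swap (V : lmodType k) x y (F : H -> H -> H -> H -> V) :
  D2 x (fun a b => D2 y (fun c d => F a b c d)) = D2 y (fun c d => D2 x (fun a b => F a b c d)).
Proof. exact: exchange_big. Qed.

Lemma push (V W : lmodType k) (g : V -> W) h F :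
  klinear g -> g (D2 h F) = D2 h (fun a b => g (F a b)).
Proof. by move=> hg; rewrite /D2 lin_sum. Qed.

Lemma coassoc (V : lmodType k) (f : H -> H -> H -> V) h : ktrilinear f ->
  D2 h (fun a b => D2 a (fun c d => f c d b)) = D2 h (fun a b => D2 b (fun c d => f a c d)).
Proof. by case: hopfH => _ CA _ _ _ hf; apply: CA. Qed.

Lemma counitL (V : lmodType k) (g : H -> V) h : klinear g ->
  D2 h (fun a b => eps a *: g b) = g h.
Proof.
case: hopfH => _ _ [_ cL _] _ _ hg; rewrite /D2.
rewrite -[RHS](congr1 g (cL h)) (lin_sum hg); apply: eq_bigr => p _; by rewrite linZ.
Qed.

Lemma counitR (V : lmodType k) (g : H -> V) h : klinear g ->
  D2 h (fun a b => eps b *: g a) = g h.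
Proof.
case: hopfH => _ _ [_ _ cR] _ _ hg; rewrite /D2.
rewrite -[RHS](congr1 g (cR h)) (lin_sum hg); apply: eq_bigr => p _; by rewrite linZ.
Qed.

Lemma antipL (V : lmodType k) (g : H -> V) h : klinear g ->
  D2 h (fun a b => g (S a * b)) = eps h *: g 1.
Proof.
case: hopfH => _ _ _ _ [_ aL _] hg; rewrite /D2 -(lin_sum hg) aL; exact: linZ.
Qed.

Lemma antipR (V : lmodType k) (g : H -> V) h : klinear g ->
  D2 h (fun a b => g (a * S b)) = eps h *: g 1.
Proof.
case: hopfH => _ _ _ _ [_ _ aR] hg; rewrite /D2 -(lin_sum hg) aR; exact: linZ.
Qed.

Lemma multD (V : lmodType k) (F : H -> H -> V) x y : kbilinear F ->
  D2 (x * y) F = D2 x (fun a b => D2 y (fun c d => F (a * c) (b * d))).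
Proof. by case: hopfH => _ _ _ [mD _ _ _] _ hF; apply: mD. Qed.

Lemma D2_1 (V : lmodType k) (F : H -> H -> V) : kbilinear F -> D2 1 F = F 1 1.
Proof. by case: hopfH => _ _ _ [_ m1 _ _] _ hF; apply: m1. Qed.

Lemma epsM x y : eps (x * y) = eps x * eps y.
Proof. by case: hopfH => _ _ _ [_ _ eM _] _. Qed.

Lemma S1 : S 1 = 1.
Proof.
have := antipL (g := fun u => u) 1 (@klin_id _ _).
rewrite D2_1; last by bil.
case: hopfH => _ _ _ [_ _ _ ->] _ ; by rewrite mulr1 scale1r.
Qed.


Lemma Santi x y : S (x * y) = S y * S x.
Proof.
pose Mid := D2 x (fun a b => D2 y (fun c d => D2 b (fun e f => D2 d (fun g h =>
               S (a*c) * (e*g) * (S h * S f))))).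
transitivity Mid.
  rewrite -{1}(counitR (g := S) (x * y) S_lin) multD; last by bil.
  apply: D2_ext => a b; apply: D2_ext => c d.
  rewrite (@D2_ext _ b _ (fun e f => (fun w => eps d *: (S (a*c) * w)) (e * S f))); last first.
    move=> e f.
    rewrite (@D2_ext _ d _ (fun g h => (fun w => S (a*c) * (e * w * S f)) (g * S h))); last first.
      by move=> g h; rewrite !mulrA.
    by rewrite (antipR (g := fun w => S (a*c) * (e * w * S f))) ?mulr1 //; lin.
  by rewrite (antipR (g := fun w => eps d *: (S (a*c) * w))) ?mulr1 ?scalerA -?epsM //; lin.
transitivity (D2 x (fun a b => D2 b (fun e f => D2 y (fun c d => D2 d (fun g h =>
               S (a*c) * (e*g) * (S h * S f)))))).
  by apply: D2_ext => a b; rewrite D2_swap.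
transitivity (D2 x (fun a b => D2 a (fun e f => D2 y (fun c d => D2 d (fun g h =>
               S (e*c) * (f*g) * (S h * S b)))))).
  rewrite (coassoc (f := fun a e f => D2 y (fun c d => D2 d (fun g h =>
               S (a*c) * (e*g) * (S h * S f))))) //; tril.
transitivity (D2 x (fun a b => D2 a (fun e f => D2 y (fun c d => D2 c (fun g h =>
               S (e*g) * (f*h) * (S d * S b)))))).
  apply: D2_ext => a b; apply: D2_ext => e f.
  rewrite (coassoc (f := fun g h d => S (e*g) * (f*h) * (S d * S b))) //; tril.
transitivity (D2 x (fun a b => D2 y (fun c d => D2 a (fun e f => D2 c (fun g h =>
               S (e*g) * (f*h) * (S d * S b)))))).
  by apply: D2_ext => a b; rewrite D2_swap.
transitivity (D2 x (fun a b => D2 y (fun c d => eps c *: (eps a *: (S d * S b))))).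
  apply: D2_ext => a b; apply: D2_ext => c d.
  rewrite -(multD (F := fun u v => S u * v * (S d * S b))); last by bil.
  rewrite (antipL (g := fun w => w * (S d * S b))); last by lin.
  by rewrite mul1r epsM mulrC scalerA.
rewrite (@D2_ext _ x _ (fun a b => eps a *: (S y * S b))); last first.
  move=> a b; rewrite (counitL (g := fun d => eps a *: (S d * S b))) //; lin.
rewrite (counitL (g := fun b => S y * S b)) //; lin.
Qed.


Variables (M : lmodType k) (act : H -> M -> M).
Hypothesis modM : is_left_module act.
Variable T : M -> M.
Hypothesis linT : klinear T.

Lemma act_bil : kbilinear act. Proof. by case: modM. Qed.
Lemma act1 m : act 1 m = m. Proof. by case: modM. Qed.
Lemma actM a b m : act (a * b) m = act a (act b m). Proof. by case: modM. Qed.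

Lemma klin_act1 (X : lmodType k) (A : X -> H) m : klinear A -> klinear (fun u => act (A u) m).
Proof. by move=> hA c x y; rewrite hA (act_bil.1). Qed.
Lemma klin_act2 (X : lmodType k) (B : X -> M) a : klinear B -> klinear (fun u => act a (B u)).
Proof. by move=> hB c x y; rewrite hB (act_bil.2). Qed.

Lemma klin_tri1 (U W X Y V : lmodType k) (F : U -> W -> X -> V) (A : Y -> U) w x :
  ktrilinear F -> klinear A -> klinear (fun u => F (A u) w x).
Proof. by move=> [h1 _ _] hA c x1 y; rewrite hA h1. Qed.
Lemma klin_tri2 (U W X Y V : lmodType k) (F : U -> W -> X -> V) (A : Y -> W) w x :
  ktrilinear F -> klinear A -> klinear (fun u => F w (A u) x).
Proof. by move=> [_ h1 _] hA c x1 y; rewrite hA h1. Qed.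
Lemma klin_tri3 (U W X Y V : lmodType k) (F : U -> W -> X -> V) (A : Y -> X) w x :
  ktrilinear F -> klinear A -> klinear (fun u => F w x (A u)).
Proof. by move=> [_ _ h1] hA c x1 y; rewrite hA h1. Qed.

Lemma klin_actR a : klinear (act a).
Proof. exact: act_bil.2. Qed.

Ltac linM := cbv beta; first
  [ exact: klin_id
  | exact: klin_actR
  | eapply klin_tri1; [eassumption | linM]
  | eapply klin_tri2; [eassumption | linM]
  | eapply klin_tri3; [eassumption | linM]
  | apply: klin_act1; linM
  | apply: klin_act2; linM
  | apply: klin_mull; linM
  | apply: klin_mulr; linM
  | apply: klin_D2; split => ? ; linM
  | apply: klin_D2_body => ? ?; linM
  | eapply klin_bil1; [eassumption | linM]
  | eapply klin_bil2; [eassumption | linM]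
  | eapply klin_eps; linM
  | eapply klin_scale; linM
  | eapply klin_comp; [first [eassumption | exact: S_lin] | linM] ].
Ltac bilM := split => ? ; linM.
Ltac trilM := split => ? ?; linM.


Definition condI := forall h m, D2 h (fun a b => act a (T (act (S b) (T m))))
   = T (D2 h (fun a b => act a (T (act (S b) m)))).
Definition condII := forall h m, D2 h (fun a b => act (S a) (T (act b (T m))))
   = T (D2 h (fun a b => act (S a) (T (act b m)))).

Lemma FormI (hi : condI) a x :
  T (act (S a) (T x)) = D2 a (fun a1 t => D2 t (fun a2 a3 =>
      act (S a1) (T (act a2 (T (act (S a3) x)))))).
Proof.
rewrite -(counitL (g := fun q => T (act (S q) (T x))) a); last by linM.
transitivity (D2 a (fun p q => D2 p (fun c d => act (S c * d) (T (act (S q) (T x)))))).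
  apply: D2_ext => p q.
  by rewrite (antipL (g := fun w => act w (T (act (S q) (T x))))) ?act1 //; linM.
rewrite (coassoc (f := fun c d q => act (S c * d) (T (act (S q) (T x))))); last by trilM.
transitivity (D2 a (fun p q => act (S p) (D2 q (fun c d => act c (T (act (S d) (T x))))))).
  apply: D2_ext => p q; rewrite (push (g := act (S p))); last by linM.
  by apply: D2_ext => c d; rewrite actM.
apply: D2_ext => p q; rewrite hi (push (g := T)) // (push (g := act (S p))) //; linM.
Qed.


Lemma FormII (hii : condII) a x :
  T (act a (T x)) = D2 a (fun a1 t => D2 t (fun a2 a3 =>
      act a1 (T (act (S a2) (T (act a3 x)))))).
Proof.
rewrite -(counitL (g := fun q => T (act q (T x))) a); last by linM.
transitivity (D2 a (fun p q => D2 p (fun c d => act (c * S d) (T (act q (T x)))))).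
  apply: D2_ext => p q.
  by rewrite (antipR (g := fun w => act w (T (act q (T x))))) ?act1 //; linM.
rewrite (coassoc (f := fun c d q => act (c * S d) (T (act q (T x))))); last by trilM.
transitivity (D2 a (fun p q => act p (D2 q (fun c d => act (S c) (T (act d (T x))))))).
  apply: D2_ext => p q; rewrite (push (g := act p)); last by linM.
  by apply: D2_ext => c d; rewrite actM.
apply: D2_ext => p q; rewrite hii (push (g := T)) // (push (g := act p)) //; linM.
Qed.

Lemma contract3L (V : lmodType k) (F : H -> H -> H -> V) h : ktrilinear F ->
  D2 h (fun a b => D2 a (fun a1 t => D2 t (fun a2 a3 => F a1 a2 (S a3 * b))))
  = D2 h (fun a b => F a b 1).
Proof.
move=> hF.
rewrite (coassoc (f := fun a1 t b => D2 t (fun a2 a3 => F a1 a2 (S a3 * b)))); last by trilM.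
apply: D2_ext => a b.
rewrite (coassoc (f := fun e g d => F a e (S g * d))); last by trilM.
rewrite (@D2_ext _ b _ (fun c d => eps d *: F a c 1)); last first.
  by move=> c d; rewrite (antipL (g := F a c)) //; linM.
by rewrite (counitR (g := fun c => F a c 1)) //; linM.
Qed.

Lemma contract3R (V : lmodType k) (F : H -> H -> H -> V) h : ktrilinear F ->
  D2 h (fun a b => D2 a (fun a1 t => D2 t (fun a2 a3 => F a1 a2 (a3 * S b))))
  = D2 h (fun a b => F a b 1).
Proof.
move=> hF.
rewrite (coassoc (f := fun a1 t b => D2 t (fun a2 a3 => F a1 a2 (a3 * S b)))); last by trilM.
apply: D2_ext => a b.
rewrite (coassoc (f := fun e g d => F a e (g * S d))); last by trilM.
rewrite (@D2_ext _ b _ (fun c d => eps d *: F a c 1)); last first.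
  by move=> c d; rewrite (antipR (g := F a c)) //; linM.
by rewrite (counitR (g := fun c => F a c 1)) //; linM.
Qed.

Lemma contract3F (V : lmodType k) (F : H -> H -> H -> V) h : ktrilinear F ->
  D2 h (fun a b => D2 b (fun b1 b' => D2 b' (fun b2 b3 => F (a * S b1) b2 b3)))
  = D2 h (fun b2 b3 => F 1 b2 b3).
Proof.
move=> hF.
rewrite -(coassoc (f := fun a b1 b' => D2 b' (fun b2 b3 => F (a * S b1) b2 b3))); last by trilM.
rewrite (@D2_ext _ h _ (fun a b => eps a *: D2 b (fun b2 b3 => F 1 b2 b3))); last first.
  move=> a b.
  by rewrite (antipR (g := fun w => D2 b (fun b2 b3 => F w b2 b3))) //; linM.
by rewrite (counitL (g := fun b => D2 b (fun b2 b3 => F 1 b2 b3))) //; linM.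
Qed.

Lemma i_ii : condI -> condII.
Proof.
move=> hi h m; rewrite (push (g := T)) //.
rewrite [RHS](@D2_ext _ h _ (fun a b => D2 a (fun a1 t => D2 t (fun a2 a3 =>
     (fun a1 a2 z => act (S a1) (T (act a2 (T (act z m))))) a1 a2 (S a3 * b))))); last first.
  move=> a b /=; rewrite FormI //; apply: D2_ext => a1 t; apply: D2_ext => a2 a3.
  by rewrite actM.
rewrite (contract3L (F := fun a1 a2 z => act (S a1) (T (act a2 (T (act z m)))))); last by trilM.
by apply: D2_ext => a b; rewrite act1.
Qed.

Lemma ii_i : condII -> condI.
Proof.
move=> hii h m; rewrite (push (g := T)) //.
rewrite [RHS](@D2_ext _ h _ (fun a b => D2 a (fun a1 t => D2 t (fun a2 a3 =>
     (fun a1 a2 z => act a1 (T (act (S a2) (T (act z m))))) a1 a2 (a3 * S b))))); last first.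
  move=> a b /=; rewrite FormII //; apply: D2_ext => a1 t; apply: D2_ext => a2 a3.
  by rewrite actM.
rewrite (contract3R (F := fun a1 a2 z => act a1 (T (act (S a2) (T (act z m)))))); last by trilM.
by apply: D2_ext => a b; rewrite act1.
Qed.


Definition condIII := forall h l m,
  D2 h (fun a b => act a (T (act (S b) (D2 l (fun c d => act (S c) (T (act d m)))))))
  = D2 l (fun c d => act (S c) (T (act d (D2 h (fun a b => act a (T (act (S b) m))))))).

Lemma i_iii : condI -> condIII.
Proof.
move=> hi h l m.
pose Phi := fun (a c1 b1 c2 b2 c3 b3 d : H) =>
  act (a * S b1) (act (S c1) (T (act (c2*b2) (T (act (S b3) (act (S c3 * d) m)))))).
transitivity (D2 h (fun a b => D2 l (fun c d => act a (T (act (S (c*b)) (T (act d m))))))).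
  apply: D2_ext => a b /=.
  rewrite (push (g := act (S b))); last by linM.
  rewrite (push (g := T)) //.
  rewrite (push (g := act a)); last by linM.
  by apply: D2_ext => c d; rewrite Santi actM.
transitivity (D2 h (fun a b => D2 l (fun c d => D2 c (fun c1 c' => D2 b (fun b1 b' =>
   D2 c' (fun c2 c3 => D2 b' (fun b2 b3 => Phi a c1 b1 c2 b2 c3 b3 d))))))).
  apply: D2_ext => a b; apply: D2_ext => c d /=.
  rewrite FormI // multD; last by bilM.
  rewrite (push (g := act a)); last by linM.
  apply: D2_ext => c1 c' /=; rewrite (push (g := act a)); last by linM.
  apply: D2_ext => b1 b' /=.
  rewrite multD; last by bilM.
  rewrite (push (g := act a)); last by linM.
  apply: D2_ext => c2 c3 /=; rewrite (push (g := act a)); last by linM.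
  apply: D2_ext => b2 b3 /=.
  by rewrite /Phi !Santi !actM.
transitivity (D2 h (fun a b => D2 l (fun c d => D2 b (fun b1 b' => D2 c (fun c1 c' =>
   D2 c' (fun c2 c3 => D2 b' (fun b2 b3 => Phi a c1 b1 c2 b2 c3 b3 d))))))).
  by apply: D2_ext => a b; apply: D2_ext => c d; rewrite D2_swap.
transitivity (D2 h (fun a b => D2 b (fun b1 b' => D2 l (fun c d => D2 c (fun c1 c' =>
   D2 c' (fun c2 c3 => D2 b' (fun b2 b3 => Phi a c1 b1 c2 b2 c3 b3 d))))))).
  by apply: D2_ext => a b; rewrite D2_swap.
transitivity (D2 h (fun a b => D2 b (fun b1 b' => D2 l (fun c d => D2 c (fun c1 c' =>
   D2 b' (fun b2 b3 => D2 c' (fun c2 c3 => Phi a c1 b1 c2 b2 c3 b3 d))))))).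
  apply: D2_ext => a b; apply: D2_ext => b1 b'; apply: D2_ext => c d.
  by apply: D2_ext => c1 c'; rewrite D2_swap.
transitivity (D2 h (fun a b => D2 b (fun b1 b' => D2 l (fun c d => D2 b' (fun b2 b3 =>
   D2 c (fun c1 c' => D2 c' (fun c2 c3 => Phi a c1 b1 c2 b2 c3 b3 d))))))).
  apply: D2_ext => a b; apply: D2_ext => b1 b'; apply: D2_ext => c d.
  by rewrite D2_swap.
transitivity (D2 h (fun a b => D2 b (fun b1 b' => D2 b' (fun b2 b3 => D2 l (fun c d =>
   D2 c (fun c1 c' => D2 c' (fun c2 c3 => Phi a c1 b1 c2 b2 c3 b3 d))))))).
  apply: D2_ext => a b; apply: D2_ext => b1 b'.
  by rewrite D2_swap.
rewrite /Phi.
rewrite (contract3F (F := fun z b2 b3 => D2 l (fun c d => D2 c (fun c1 c' => D2 c' (fun c2 c3 =>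
   act z (act (S c1) (T (act (c2*b2) (T (act (S b3) (act (S c3 * d) m)))))))))));
  last by trilM.
transitivity (D2 h (fun b2 b3 => D2 l (fun c d =>
   act 1 (act (S c) (T (act (d*b2) (T (act (S b3) (act 1 m))))))))).
  apply: D2_ext => b2 b3.
  rewrite (contract3L (F := fun c1 c2 z =>
     act 1 (act (S c1) (T (act (c2*b2) (T (act (S b3) (act z m)))))))) //; trilM.
rewrite D2_swap; apply: D2_ext => c d /=.
rewrite (push (g := act d)); last by linM.
rewrite (push (g := T)) //.
rewrite (push (g := act (S c))); last by linM.
by apply: D2_ext => a b; rewrite !act1 actM.
Qed.


Lemma Ttc1 x : Ttc Delta S act T 1 x = T x.
Proof.
change (D2 1 (fun a b => act (S a) (T (act b x))) = T x).
by rewrite D2_1 ?S1 ?act1 //; bilM.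
Qed.

End Hopf.

Theorem mainTheorem5 (k : fieldType) (H : algType k)
    (Delta : H -> seq (H * H)) (eps : H -> k) (S : H -> H)
    (hopfH : is_hopf Delta eps S) (bijS : bijective S)
    (M : lmodType k) (act : H -> M -> M) (modM : is_left_module act)
    (T : M -> M) (linT : klinear T) (projT : forall m : M, T (T m) = T m) :
  [<-> (forall (h : H) (m : M), Tc Delta S act T h (T m) = T (Tc Delta S act T h m));
       (forall (h : H) (m : M), Ttc Delta S act T h (T m) = T (Ttc Delta S act T h m));
       (forall (h l : H) (m : M),
          Tc Delta S act T h (Ttc Delta S act T l m)
          = Ttc Delta S act T l (Tc Delta S act T h m))].
Proof.
tfae.
- move=> hi; exact: (i_ii hopfH modM linT hi).
- move=> hii; apply: (i_iii hopfH modM linT); exact: (ii_i hopfH modM linT hii).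
- move=> hiii h m; have := hiii h 1 m; by rewrite !(Ttc1 hopfH modM linT).
Qed.
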